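(* Let $\Phi$ be an $N\times\mathcal{C}$ complex matrix with columns $\varphi_1,\dots,\varphi_{\mathcal{C}}$ (entries $\varphi_j(x)$, $x=1,\dots,N$) such that (i) $\sum_{j=1}^{\mathcal{C}}\varphi_j(x)\overline{\varphi_j(y)}=0$ whenever $x\neq y$, (ii) $\sum_{j=1}^{\mathcal{C}}\varphi_j(x)=0$ for all $x$, and (iii) the columns of $\Phi$ form a group under pointwise multiplication. Then the normalized columns $(N^{-1/2}\varphi_j)_{j=1,\dots,\mathcal{C}}$ form a tight frame in $\mathbb{C}^N$ with redundancy $\mathcal{C}/N$; that is, for every $v\in\mathbb{C}^N$, $\sum_{j=1}^{\mathcal{C}}|\langle v,N^{-1/2}\varphi_j\rangle|^2=\frac{\mathcal{C}}{N}\|v\|^2$.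
   Context: ''The columns form a group under pointwise multiplication'' means: for all $j,j'$ there is $j''$ with $\varphi_j(x)\varphi_{j'}(x)=\varphi_{j''}(x)$ for all $x$, and the set of columns is a group under this operation (its identity being the all-ones column). $\Phi$ is assumed to have no repeated columns. $\|\cdot\|$ is the Euclidean norm and $\langle\cdot,\cdot\rangle$ the standard Hermitian inner product. *)

(* Defs.v *)
From HB Require Import structures.
From mathcomp Require Import all_boot all_order all_algebra.
From mathcomp Require Import complex.
From mathcomp Require Import reals.
Set Implicit Arguments. Unset Strict Implicit. Unset Printing Implicit Defensive.
Import Order.TTheory GRing.Theory Num.Theory.
Local Open Scope ring_scope.

Definition hdot (C : numClosedFieldType) (N : nat) (v w : 'I_N -> C) : C :=
  \sum_(x < N) v x * (w x)^*.

Definition sqnorm (C : numClosedFieldType) (N : nat) (v : 'I_N -> C) : C :=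
  \sum_(x < N) `|v x| ^+ 2.

(* The columns of Phi form a group under pointwise multiplication
   (with identity the all-ones column); associativity is automatic. *)
Definition columns_form_mul_group (C : numClosedFieldType) (N M : nat)
    (Phi : 'M[C]_(N, M)) : Prop :=
  [/\ (exists e : 'I_M, forall x : 'I_N, Phi x e = 1),
      (forall j j' : 'I_M, exists j'' : 'I_M,
          forall x : 'I_N, Phi x j * Phi x j' = Phi x j'') &
      (forall j : 'I_M, exists j' : 'I_M,
          forall x : 'I_N, Phi x j * Phi x j' = 1)].

Definition no_repeated_columns (C : numClosedFieldType) (N M : nat)
    (Phi : 'M[C]_(N, M)) : Prop :=
  forall j j' : 'I_M, (forall x : 'I_N, Phi x j = Phi x j') -> j = j'.

(* Main.v *)
Require Import Defs.
From HB Require Import structures.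
From mathcomp Require Import all_boot all_order all_algebra.
From mathcomp Require Import complex.
From mathcomp Require Import reals.
Import Order.TTheory GRing.Theory Num.Theory.
Local Open Scope ring_scope.

Lemma col_norm1 (C : numClosedFieldType) (N M : nat) (Phi : 'M[C]_(N, M)) :
  columns_form_mul_group Phi -> no_repeated_columns Phi ->
  forall x j, `|Phi x j| = 1.
Proof.
case=> [[e He] Hmul Hinv] Hnorep x j.
pose sig k := odflt k [pick k'' | [forall y, Phi y j * Phi y k == Phi y k'']].
have sigP k y : Phi y j * Phi y k = Phi y (sig k).
  rewrite /sig; case: pickP => [k'' /forallP H|H] /=; first exact/eqP.
  have [k'' Hk] := Hmul j k.
  have := H k''; suff -> : [forall y, Phi y j * Phi y k == Phi y k''] by [].
  by apply/forallP => z; apply/eqP.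
have inj : injective sig.
  move=> k1 k2 E; have [j' Hj'] := Hinv j; apply: Hnorep => y.
  have : Phi y j' * (Phi y j * Phi y k1) = Phi y j' * (Phi y j * Phi y k2).
    by rewrite !sigP E.
  by rewrite !mulrA (mulrC (Phi y j')) Hj' !mul1r.
have nz k : Phi x k != 0.
  apply/eqP => H0; have [k' Hk'] := Hinv k; have := Hk' x.
  by rewrite H0 mul0r => /eqP; rewrite eq_sym oner_eq0.
have Pnz : \prod_k Phi x k != 0.
  by rewrite prodf_seq_neq0; apply/allP => k _; rewrite nz.
have E : \prod_k Phi x k = \prod_k Phi x (sig k) := reindex_inj inj.
move: E; under [in RHS]eq_bigr => k _ do rewrite -sigP.
rewrite big_split /= prodr_const card_ord -{1}(mul1r (\prod_k Phi x k)).
move/(mulIf Pnz)/esym => Hpow.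
have M0 : (0 < M)%N by apply: leq_ltn_trans (ltn_ord e).
apply/eqP; rewrite -(pexpr_eq1 M0) ?normr_ge0 // -normrX Hpow normr1 //.
Qed.

Theorem lemma2p4 (R : realType) (N M : nat) (Phi : 'M[R[i]]_(N, M))
  (Horth : forall x y : 'I_N, x != y -> \sum_(j < M) Phi x j * (Phi y j)^* = 0)
  (Hsum0 : forall x : 'I_N, \sum_(j < M) Phi x j = 0)
  (Hgrp : columns_form_mul_group Phi)
  (Hnorep : no_repeated_columns Phi) :
  forall v : 'I_N -> R[i],
    \sum_(j < M)
       `| hdot v (fun x => (sqrtC (N%:R : R[i]))^-1 * Phi x j) | ^+ 2
    = (M%:R / N%:R) * sqnorm v.
Proof.
move=> v.
have n1 := @col_norm1 _ _ _ _ Hgrp Hnorep.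
set c := (sqrtC (N%:R : R[i]))^-1.
have c0 : 0 <= c by rewrite invr_ge0 sqrtC_ge0 ler0n.
have cc : c ^+ 2 = N%:R^-1 by rewrite /c exprVn sqrtCK.
pose S j := \sum_(x < N) v x * (Phi x j)^*.
have H1 j : `| hdot v (fun x => c * Phi x j) | ^+ 2 = c ^+ 2 * (S j * (S j)^*).
  rewrite /hdot.
  under eq_bigr => x _ do rewrite rmorphM /= (geC0_conj c0) mulrCA.
  by rewrite -mulr_sumr normrM exprMn (ger0_norm c0) normCK.
under eq_bigr => j _ do rewrite H1.
rewrite -mulr_sumr cc [M%:R / _]mulrC -mulrA; congr (_ * _).
have H2 j : S j * (S j)^* =
    \sum_(x < N) \sum_(y < N) v x * (v y)^* * ((Phi x j)^* * Phi y j).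
  rewrite /S rmorph_sum mulr_suml; apply: eq_bigr => x _.
  rewrite mulr_sumr; apply: eq_bigr => y _.
  by rewrite rmorphM /= conjCK mulrACA.
under eq_bigr => j _ do rewrite H2.
rewrite exchange_big /= /sqnorm mulr_sumr; apply: eq_bigr => x _.
rewrite exchange_big /= (bigD1 x) //= [X in _ + X]big1 ?addr0.
  rewrite -mulr_sumr mulrC; congr (_ * _); last by rewrite normCK.
  rewrite (eq_bigr (fun _ => 1)); first by rewrite sumr_const card_ord.
  by move=> j _; rewrite mulrC -normCK n1 expr1n.
move=> y yx; rewrite -mulr_sumr (eq_bigr (fun j => Phi y j * (Phi x j)^*)).
  by rewrite Horth ?mulr0.
by move=> j _; rewrite mulrC.
Qed.
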